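(* Let $n\ge2$ and let $\mathsf u$ be any subword of $\bm\lambda_n$. Write $\mathsf r^{\mathsf u}=[r_1,\dots,r_m]$ and let $i_j$ denote the index (position in $\bm\lambda_n$) of the skip corresponding to $r_j$. Then for each $j$, $$(r_1\cdots r_{j-1})\,r_j\,(r_{j-1}\cdots r_1)=\Big(\!\Big(0,\; i_j+\Big\lfloor \tfrac{i_j-1}{n-1}\Big\rfloor\Big)\!\Big).$$
   Context: $\widetilde S_n$ is the group, under composition, of bijections $w:\mathbb Z\to\mathbb Z$ with $w(i+n)=w(i)+n$ and $\sum_{i=1}^n w(i)=\binom{n+1}2$. For $i\not\equiv j\pmod n$, $(\!(i,j)\!)$ swaps $i+kn$ and $j+kn$ for all $k\in\mathbb Z$; $s_i=(\!(i,i+1)\!)$, $i\in\{0,\dots,n-1\}$. $\bm\lambda_n$ is the word $[s_0,\dots,s_{n-1}]$ repeated $n-1$ times with $j$-th letter $\sigma_j=s_{(j-1)\bmod n}$ (index in $\{0,\dots,n-1\}$). A subword is $\mathsf u=[u_1,\dots,u_{n(n-1)}]$ with $u_j\in\{\sigma_j,e\}$; $j$ is a skip if $u_j=e$. $u_{(j)}=u_1\cdots u_j$, $u_{(0)}=e$. $\textsc{inv}(\mathsf u)=[t_1,\dots,t_{n(n-1)}]$ with $t_j=u_{(j-1)}\sigma_ju_{(j-1)}^{-1}$, and $\mathsf r^{\mathsf u}$ is the subsequence of the $t_j$ over skips $j$, in increasing order of $j$. *)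

(* Defs.v *)
(* Affine permutations are modelled as functions int -> int,
   group product = composition: (u v) x = u (v x). *)
From mathcomp Require Import all_boot all_order all_algebra.
Set Implicit Arguments. Unset Strict Implicit. Unset Printing Implicit Defensive.
Import GRing.Theory Num.Theory.
Local Open Scope ring_scope.

(* ((a, b)) for a <> b mod n : swaps a + kn and b + kn for all k. *)
Definition refl (n : nat) (a b : int) (x : int) : int :=
  if ((x - a) %% n == 0)%Z then x + (b - a)
  else if ((x - b) %% n == 0)%Z then x + (a - b)
  else x.

Definition sref (n : nat) (i : int) : int -> int := refl n i (i + 1).

Definition prodf (fs : seq (int -> int)) : int -> int :=
  foldr (fun f g => f \o g) id fs.

(* j-th letter of lambda_n (j >= 1): sigma_j = s_{(j-1) mod n} *)
Definition sigma (n j : nat) : int -> int := sref n (((j.-1) %% n)%N)%:Z.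

(* A subword u is encoded by b : seq bool of size n(n-1); position j (1-based)
   is a letter (u_j = sigma_j) iff nth false b j.-1 is true, a skip otherwise.
   uword n b j = [u_1; ...; u_j] as a list of elements. *)
Definition uword (n : nat) (b : seq bool) (j : nat) : seq (int -> int) :=
  [seq (if nth false b k.-1 then sigma n k else id) | k <- iota 1 j].

(* t_j = u_(j-1) sigma_j u_(j-1)^{-1}; since u_(j-1) = u_1 ... u_(j-1) is a
   product of involutions, u_(j-1)^{-1} = u_(j-1) ... u_1. *)
Definition tinv (n : nat) (b : seq bool) (j : nat) : int -> int :=
  prodf (uword n b j.-1 ++ sigma n j :: rev (uword n b j.-1)).

Definition skips (b : seq bool) : seq nat :=
  [seq k <- iota 1 (size b) | ~~ nth false b k.-1].

Definition rseq (n : nat) (b : seq bool) : seq (int -> int) :=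
  [seq tinv n b k | k <- skips b].

(* Main.v *)
Require Import Defs.
From mathcomp Require Import all_boot all_order all_algebra.
From mathcomp Require Import ring lra zify.
Set Implicit Arguments. Unset Strict Implicit. Unset Printing Implicit Defensive.
Import GRing.Theory Num.Theory.
Local Open Scope ring_scope.

Lemma reflE n a b x : refl n a b x =
  if (n%:Z %| x - a)%Z then x + (b - a) else if (n%:Z %| x - b)%Z then x + (a - b) else x.
Proof.
have E : forall m, ((m %% n)%Z == 0) = (n%:Z %| m)%Z.
  by move=> m; apply/eqP/dvdz_mod0P.
by rewrite /refl !E.
Qed.

Lemma dvd_p1 (n : nat) u : (2 <= n)%N -> (n%:Z %| u)%Z -> (n%:Z %| u + 1)%Z = false.
Proof.
move=> hn hu; apply/negP => h.
have : (n%:Z %| (u + 1) - u)%Z by rewrite rpredB.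
rewrite addrC addKr dvdz1 /=; apply/negP; rewrite -(eqn_exp2r _ _ (ltn0Sn 0)) /= expn1.
by apply/eqP => e; move: hn; rewrite e.
Qed.

Lemma sref_inv (n : nat) c x : (2 <= n)%N -> sref n c (sref n c x) = x.
Proof.
move=> hn; rewrite /sref.
rewrite [refl n c (c+1) x]reflE.
case: ifP => H1.
  rewrite reflE.
  have -> : x + (c + 1 - c) - c = (x - c) + 1 by ring.
  rewrite dvd_p1 //.
  have -> : x + (c + 1 - c) - (c + 1) = x - c by ring.
  by rewrite H1; ring.
case: ifP => H2.
  rewrite reflE.
  have -> : x + (c - (c + 1)) - c = x - (c + 1) by ring.
  by rewrite H2; ring.
by rewrite reflE H1 H2.
Qed.

Lemma dvd_addMn (n : nat) (u k : int) : (n%:Z %| u + k * n)%Z = (n%:Z %| u)%Z.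
Proof. by rewrite rpredDr // dvdz_mull. Qed.

Lemma sref_trans (n : nat) (c z k : int) : sref n c (z + k * n) = sref n c z + k * n.
Proof.
rewrite /sref !reflE.
have -> : z + k * n - c = (z - c) + k * n by ring.
have -> : z + k * n - (c + 1) = (z - (c + 1)) + k * n by ring.
rewrite !dvd_addMn.
by case: ifP => _; [|case: ifP => _]; ring.
Qed.

Lemma refl_conj (n : nat) (a b : int) (g h : int -> int) :
  (forall z k : int, g (z + k * n) = g z + k * n) -> injective g ->
  (forall x, g (h x) = x) ->
  forall x, g (refl n a b (h x)) = refl n (g a) (g b) x.
Proof.
move=> gT ginj gh x.
have tr : forall y a, (n%:Z %| g y - g a)%Z = (n%:Z %| y - a)%Z.
  move=> y a'; apply/idP/idP => /dvdzP [k hk].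
    have : g y = g (a' + k * n) by rewrite gT -hk; ring.
    move/ginj => ->; apply/dvdzP; exists k; ring.
  apply/dvdzP; exists k.
  have -> : y = a' + k * n by rewrite -hk; ring.
  rewrite gT; ring.
rewrite -{2}(gh x); set y := h x.
rewrite !reflE !tr.
case: ifP => H1.
  move/dvdzP: H1 => [k hk].
  have -> : y + (b - a) = b + k * n by rewrite -hk; ring.
  have -> : y = a + k * n by rewrite -hk; ring.
  rewrite !gT; ring.
case: ifP => H2 //.
move/dvdzP: H2 => [k hk].
have -> : y + (a - b) = a + k * n by rewrite -hk; ring.
have -> : y = b + k * n by rewrite -hk; ring.
rewrite !gT; ring.
Qed.

Lemma sref_conj (n : nat) (c a b x : int) : (2 <= n)%N ->
  sref n c (refl n a b (sref n c x)) = refl n (sref n c a) (sref n c b) x.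
Proof.
move=> hn; apply: refl_conj.
- exact: sref_trans.
- by move=> u v e; rewrite -(sref_inv c u hn) e sref_inv.
- by move=> y; rewrite sref_inv.
Qed.

Lemma refl_shift (n : nat) (a b x : int) : refl n a b (x - 1) + 1 = refl n (a + 1) (b + 1) x.
Proof.
rewrite !reflE.
have -> : x - 1 - a = x - (a + 1) by ring.
have -> : x - 1 - b = x - (b + 1) by ring.
by case: ifP => _; [|case: ifP => _]; ring.
Qed.

Lemma refl_mod (n : nat) (a b a' b' x : int) : (n%:Z %| a' - a)%Z -> b' - a' = b - a ->
  refl n a' b' x = refl n a b x.
Proof.
move=> /dvdzP [k hk] e.
rewrite !reflE.
have -> : x - a' = (x - a) + (-k) * n by rewrite mulNr -hk; ring.
have -> : x - b' = (x - b) + (-k) * n.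
  have -> : b' = b - a + a' by rewrite -e; ring.
  rewrite mulNr -hk; ring.
rewrite !dvd_addMn.
have -> : b' - a' = b - a by [].
have -> : a' - b' = a - b by rewrite -opprB e opprB.
by [].
Qed.

Lemma prodf_cons f L x : prodf (f :: L) x = f (prodf L x).
Proof. by []. Qed.

Lemma prodf_cat L1 L2 x : prodf (L1 ++ L2) x = prodf L1 (prodf L2 x).
Proof. by elim: L1 x => //= f L IH x; rewrite IH. Qed.

Lemma prodf_rcons L g x : prodf (rcons L g) x = prodf L (g x).
Proof. by rewrite -cats1 prodf_cat. Qed.

Lemma dvd_modz (n : nat) (m : int) : (n%:Z %| (m %% n)%Z - m)%Z.
Proof.
apply/dvdzP; exists (- (m %/ n)%Z).
rewrite {2}(divz_eq m n); ring.
Qed.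

Lemma sigma_shift n k x : (0 < k)%N -> sigma n k.+1 x = sigma n k (x - 1) + 1.
Proof.
move=> hk; rewrite /sigma /sref refl_shift; apply: refl_mod; last by ring.
rewrite -!modz_nat /=.
have e : (k%:Z %% n)%Z - ((k.-1%:Z %% n)%Z + 1)
   = ((k%:Z %% n)%Z - k%:Z) - ((k.-1%:Z %% n)%Z - k.-1%:Z) + (k%:Z - k.-1%:Z - 1) by ring.
rewrite e.
have -> : (k%:Z - k.-1%:Z - 1) = 0 by rewrite -{1}(prednK hk) intS; ring.
by rewrite addr0 rpredB // dvd_modz.
Qed.

Lemma prodf_shift n L x : all (fun k => 0 < k)%N L ->
  prodf (map (fun k => sigma n k.+1) L) x = prodf (map (sigma n) L) (x - 1) + 1.
Proof.
elim: L => [|k L IH] /=; first by move=> _; ring.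
move=> /andP [hk hL]; rewrite IH // sigma_shift // addrK //.
Qed.

Definition fval (n i : nat) : int := (i + (i.-1 %/ n.-1))%N%:Z.

Lemma dvdz_nat (n m : nat) : (n%:Z %| m%:Z)%Z = (n %| m)%N.
Proof. by []. Qed.

Lemma fval_step n i : (2 <= n)%N -> (1 <= i)%N ->
  sref n 0 (fval n i + 1) = fval n i.+1.
Proof.
move=> hn hi; rewrite /sref reflE /fval add0r subr0 -PoszD.
set m := i.-1. have hm : i = m.+1 by rewrite /m prednK.
rewrite hm /=.
set n' := n.-1. have hn' : n = n'.+1 by rewrite /n' prednK // ltnW.
have n'p : (0 < n')%N by move: hn; rewrite hn'.
rewrite (divn_eq m n') in hm *.
set q := (m %/ n')%N; set r := (m %% n')%N.
have hr : (r < n')%N := ltn_pmod m n'p.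
have q1 : ((q * n' + r) %/ n' = q)%N by rewrite divnMDl // divn_small // addn0.
rewrite q1.
have y1 : (((q * n' + r).+1 + q) + 1)%N%:Z - 1 = ((q * n' + r).+1 + q)%N%:Z.
  by rewrite PoszD addrK.
rewrite y1 !dvdz_nat.
have [e|ne] := eqVneq r.+1 n'.
  have q2 : ((q * n' + r).+1 %/ n' = q.+1)%N.
    by rewrite -addnS e -mulSnr mulnK.
  rewrite q2.
  have -> : (((q * n' + r).+1 + q) + 1 = q.+1 * n)%N by rewrite hn' -e; lia.
  rewrite dvdn_mull // subr0 -PoszD; congr Posz; rewrite hn' -e; lia.
have hr2 : (r.+1 < n')%N by rewrite ltn_neqAle ne hr.
have q2 : ((q * n' + r).+1 %/ n' = q)%N by rewrite -addnS divnMDl // divn_small // addn0.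
rewrite q2.
have -> : (((q * n' + r).+1 + q) + 1 = q * n + r.+2)%N by rewrite hn'; lia.
have -> : ((q * n' + r).+1 + q = q * n + r.+1)%N by rewrite hn'; lia.
rewrite !dvdn_addr ?dvdn_mull //.
have -> : (n %| r.+2)%N = false.
  apply/negP => /dvdn_leq => /(_ isT); rewrite hn'; lia.
have -> : (n %| r.+1)%N = false.
  apply/negP => /dvdn_leq => /(_ isT); rewrite hn'; lia.
by congr Posz; rewrite hn'; lia.
Qed.

Definition Fw n i := map (sigma n) (iota 1 i.-1).

Lemma Fval n i x : (2 <= n)%N -> (1 <= i)%N ->
  prodf (Fw n i ++ sigma n i :: rev (Fw n i)) x = refl n 0 (fval n i) x.
Proof.
move=> hn; elim: i x => // i IH x _.
case: i IH => [|i] IH.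
  by rewrite /Fw /= /fval div0n /sigma /sref mod0n.
rewrite /Fw /= -/(iota 2 i) -[2%N]/(1 + 1)%N iotaDl -map_comp.
set M := map _ (iota 1 i).
rewrite rev_cons -rcons_cons -rcons_cat prodf_rcons.
have -> : M ++ sigma n i.+2 :: rev M =
    map (fun k => sigma n k.+1) (iota 1 i ++ i.+1 :: rev (iota 1 i)).
  by rewrite map_cat /= map_rev.
rewrite prodf_shift; last first.
  rewrite all_cat /= all_rev andbb.
  by apply/allP => k; rewrite mem_iota; lia.
have -> : map (sigma n) (iota 1 i ++ i.+1 :: rev (iota 1 i)) =
   Fw n i.+1 ++ sigma n i.+1 :: rev (Fw n i.+1) by rewrite /Fw map_cat /= map_rev.
rewrite IH // refl_shift add0r.
have s1 : sigma n 1 = sref n 0 by rewrite /sigma mod0n.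
rewrite s1 sref_conj // fval_step //.
congr refl.
have h1 : (n%:Z %| 1)%Z = false by have := dvd_p1 (u:=0) hn (dvdz0 _); rewrite add0r.
rewrite /sref reflE subr0 h1 add0r subrr dvdz0; ring.
Qed.

Lemma inv_list (T : Type) (h : T -> int -> int) (s : seq T) :
  (forall k y, h k (h k y) = y) -> forall x,
  prodf (map h s) (prodf (rev (map h s)) x) = x /\
  prodf (rev (map h s)) (prodf (map h s) x) = x.
Proof.
move=> hh; elim: s => [|a s IH] x //=.
rewrite rev_cons !prodf_rcons /=.
by split; [rewrite (proj1 (IH _)) hh | rewrite hh (proj2 (IH _))].
Qed.

Section Main.
Variables (n : nat) (b : seq bool).
Hypothesis hn : (2 <= n)%N.

Let h := fun k => if nth false b k.-1 then sigma n k else id.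
Let p := fun k : nat => ~~ nth false b k.-1.

Lemma uwordE k : uword n b k = map h (iota 1 k).
Proof. by []. Qed.

Lemma h_inv k y : h k (h k y) = y.
Proof. by rewrite /h; case: ifP => // _; rewrite /sigma sref_inv. Qed.

Lemma sigma_inv k y : sigma n k (sigma n k y) = y.
Proof. by rewrite /sigma sref_inv. Qed.

Lemma U_inv1 k x : prodf (uword n b k) (prodf (rev (uword n b k)) x) = x.
Proof. by rewrite uwordE; apply: (proj1 (inv_list _ h_inv x)). Qed.

Lemma U_inv2 k x : prodf (rev (uword n b k)) (prodf (uword n b k) x) = x.
Proof. by rewrite uwordE; apply: (proj2 (inv_list _ h_inv x)). Qed.

Lemma tinvE k x : tinv n b k x =
  prodf (uword n b k.-1) (sigma n k (prodf (rev (uword n b k.-1)) x)).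
Proof. by rewrite /tinv prodf_cat. Qed.

Lemma tinv_inv k y : tinv n b k (tinv n b k y) = y.
Proof. by rewrite !tinvE U_inv2 sigma_inv U_inv1. Qed.

Definition Rl k := map (tinv n b) (filter p (iota 1 k)).
Definition Wl k := map (sigma n) (iota 1 k).

Lemma U_decomp k x :
  prodf (uword n b k) x = prodf (rev (Rl k)) (prodf (Wl k) x).
Proof.
elim: k x => [|k IH] x //.
have ei : iota 1 k.+1 = rcons (iota 1 k) k.+1.
  by rewrite -cats1 -(addn1 k) iotaD addnC.
rewrite /Rl /Wl ei filter_rcons !map_rcons !prodf_rcons.
rewrite -/(Rl k) -/(Wl k).
rewrite uwordE ei map_rcons prodf_rcons -uwordE.
rewrite /p /h /=.
case: ifP => hb /=.
  by rewrite IH.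
rewrite map_rcons rev_rcons prodf_cons -IH tinvE /= U_inv2 sigma_inv.
by rewrite IH.
Qed.

Lemma main_gen i x : (1 <= i)%N ->
  prodf (Rl i.-1) (tinv n b i (prodf (rev (Rl i.-1)) x)) = refl n 0 (fval n i) x.
Proof.
move=> hi.
have Rinv' := fun y => inv_list (filter p (iota 1 i.-1)) tinv_inv y.
have Winv := fun y => inv_list (iota 1 i.-1) sigma_inv y.
have UiE : forall y, prodf (rev (uword n b i.-1)) y
    = prodf (rev (Wl i.-1)) (prodf (Rl i.-1) y).
  move=> y; set z := prodf (rev (Wl i.-1)) _.
  have : prodf (uword n b i.-1) z = y.
    by rewrite U_decomp /z (proj1 (Winv _)) (proj2 (Rinv' _)).
  by move=> <-; rewrite U_inv2.
rewrite tinvE U_decomp (proj1 (Rinv' _)) UiE (proj1 (Rinv' _)).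
by rewrite -(Fval x hn hi) prodf_cat.
Qed.

Lemma take_skips j : (j < size (skips b))%N ->
  take j (skips b) = filter p (iota 1 (nth 0%N (skips b) j).-1).
Proof.
move=> hj; set i := nth 0%N (skips b) j.
have mi : i \in skips b by apply: mem_nth.
have sk : skips b = filter p (iota 1 (size b)) by [].
move: (mi); rewrite sk mem_filter mem_iota => /andP [pi /andP [i1 i2]].
have ei : iota 1 (size b) = iota 1 i.-1 ++ i :: iota i.+1 (size b - i).
  rewrite {1}(_ : size b = (i.-1 + (size b - i).+1)%N); last by lia.
  rewrite iotaD; congr (_ ++ _).
  have -> : (1 + i.-1)%N = i by lia.
  by [].
have es : skips b = filter p (iota 1 i.-1) ++ i :: filter p (iota i.+1 (size b - i)).
  by rewrite sk ei filter_cat /= pi.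
have ni : i \notin filter p (iota 1 i.-1) by rewrite mem_filter mem_iota; lia.
have uq : uniq (skips b) by rewrite sk filter_uniq // iota_uniq.
have <- : index i (skips b) = j by rewrite /i index_uniq.
by rewrite -?sk es index_cat (negbTE ni) /= eqxx addn0 take_size_cat.
Qed.

End Main.

Theorem lemma5p16 (n : nat) (hn : (2 <= n)%N) (b : seq bool)
    (hb : size b = (n * (n - 1))%N) (j : nat) (hj : (j < size (skips b))%N) :
  let r := rseq n b in
  let i := nth 0%N (skips b) j in
  forall x : int,
    prodf (take j r ++ nth id r j :: rev (take j r)) x
    = refl n 0 (i + (i.-1 %/ n.-1))%N%:Z x.
Proof.
move=> r i x.
have mi : i \in skips b by apply: mem_nth.
have i1 : (1 <= i)%N by move: mi; rewrite /skips mem_filter mem_iota => /andP [_ /andP []].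
have -> : take j r = Rl n b i.-1 by rewrite /r /rseq -map_take (take_skips hn hj).
have -> : nth id r j = tinv n b i by rewrite /r /rseq (nth_map 0%N).
rewrite prodf_cat /= -[(i + _)%N%:Z]/(fval n i) -(@main_gen n b hn i x i1).
by [].
Qed.
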